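(* Let $n\geqslant 2$, $N=\{1,\ldots,n\}$ and $\alpha\in\mathbb{R}$. Then $\mathscr{BG}_\alpha(n)$, viewed as a subset of $\mathbb{R}^{2^N\setminus\{\varnothing,N\}}$, is a $(2^n-2)$-dimensional affine cone (a cone translated by a point) which is not pointed. Its lineality space has dimension $n-1$, with basis $(w_i)_{i\in N\setminus\{n\}}$, where \[ w_i=\sum_{S\ni i,\ S\not\ni n}\delta_S-\sum_{S\not\ni i,\ S\ni n}\delta_S. \] The maximal affine subspace contained in $\mathscr{BG}_\alpha(n)$ is the set of $v$ satisfying \[ \sum_{i\in N}v(\{i\})=\alpha,\qquad v(S)+\sum_{i\in N\setminus S}v(\{i\})=\alpha\ \text{ for all } S\subsetneq N,\ |S|>1. \]
   Context: A game on $N$ is a map $v:2^N\to\mathbb{R}$ with $v(\varnothing)=0$. For nonempty $S$, $\delta_S(T)=1$ if $T=S$ and $0$ otherwise (here restricted to coordinates $T\neq\varnothing,N$). A collection $\mathscr{B}$ of nonempty subsets of $N$ is balanced if there exist positive weights $(\lambda_S)_{S\in\mathscr{B}}$ with $\sum_{S\in\mathscr{B},S\ni i}\lambda_S=1$ for all $i\in N$; minimal balanced if no proper subcollection is balanced, with unique weights $\lambda^{\mathscr{B}}_S$. $\mathfrak{B}^*(n)$ is the set of minimal balanced collections on $N$ other than $\{N\}$. For $\alpha\in\mathbb{R}$, $\mathscr{BG}_\alpha(n)$ is the set of games $v$ with $v(N)=\alpha$ and $\sum_{S\in\mathscr{B}}\lambda^{\mathscr{B}}_S v(S)\leqslant\alpha$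 for all $\mathscr{B}\in\mathfrak{B}^*(n)$; since $v(N)$ is fixed, $v$ is identified with its vector of values on $2^N\setminus\{\varnothing,N\}$. *)

(* Defs.v *)
From HB Require Import structures.
From mathcomp Require Import all_boot all_order all_algebra.
From mathcomp Require Import reals.

Set Implicit Arguments.
Unset Strict Implicit.
Unset Printing Implicit Defensive.

Import Order.TTheory GRing.Theory Num.Theory.
Local Open Scope ring_scope.

(* Players N = {1,...,n} are represented by 'I_n = {0,...,n-1};
   player "n" of the paper is the ordinal with value n.-1. *)

Definition gcoord (n : nat) : finType :=
  {S : {set 'I_n} | (S != set0) && (S != setT)}.

(* A game with v(N) = alpha, identified with its vector of values on gcoord n. *)
Notation gvec R n := {ffun gcoord n -> R^o}.

Definition gval (R : realType) (n : nat) (alpha : R) (x : gvec R n)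
  (S : {set 'I_n}) : R :=
  if @insub _ (fun S : {set 'I_n} => (S != set0) && (S != setT)) (gcoord n) S
     is Some s then x s
  else if S == set0 then 0 else alpha.

Definition balancing_weights (R : realType) (n : nat)
  (B : {set {set 'I_n}}) (lam : {set 'I_n} -> R) : Prop :=
  (forall S, S \in B -> 0 < lam S) /\
  (forall i : 'I_n, \sum_(S in B | i \in S) lam S = 1).

Definition balanced (R : realType) (n : nat) (B : {set {set 'I_n}}) : Prop :=
  set0 \notin B /\ exists lam : {set 'I_n} -> R, balancing_weights B lam.

Definition minimal_balanced (R : realType) (n : nat) (B : {set {set 'I_n}})
  : Prop :=
  balanced R B /\ forall B' : {set {set 'I_n}}, B' \proper B -> ~ balanced R B'.

Definition Bstar (R : realType) (n : nat) (B : {set {set 'I_n}}) : Prop :=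
  minimal_balanced R B /\ B != [set setT].

(* The weights of a
   minimal balanced collection are unique, so quantifying over all balancing
   weight systems of B is the same as using lambda^B. *)
Definition BG (R : realType) (n : nat) (alpha : R) (x : gvec R n) : Prop :=
  forall B : {set {set 'I_n}}, Bstar R B ->
  forall lam : {set 'I_n} -> R, balancing_weights B lam ->
  \sum_(S in B) lam S * gval alpha x S <= alpha.

Definition is_cone (R : realType) (V : lmodType R) (C : V -> Prop) : Prop :=
  C 0 /\ (forall c d, C c -> C d -> C (c + d)) /\
  (forall (t : R) c, 0 <= t -> C c -> C (t *: c)).

Definition is_affine_cone (R : realType) (V : lmodType R) (P : V -> Prop)
  : Prop :=
  exists (x0 : V) (C : V -> Prop), is_cone C /\
    forall x, P x <-> exists c, C c /\ x = x0 + c.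

Definition is_apex (R : realType) (V : lmodType R) (P : V -> Prop) (x0 : V)
  : Prop :=
  is_cone (fun c => P (x0 + c)).

Definition lineality (R : realType) (V : lmodType R) (P : V -> Prop) (d : V)
  : Prop :=
  forall x (t : R), P x -> P (x + t *: d).

Definition is_affine_subspace (R : realType) (V : lmodType R) (A : V -> Prop)
  : Prop :=
  (exists x, A x) /\
  (forall x y (t : R), A x -> A y -> A ((1 - t) *: x + t *: y)).

Definition lin_indep (R : realType) (V : lmodType R) (I : finType)
  (b : I -> V) : Prop :=
  forall c : I -> R, \sum_(i : I) c i *: b i = 0 -> forall i, c i = 0.

Definition is_last (n : nat) (j : 'I_n) : bool := val j == n.-1.

Definition contains_last (n : nat) (S : {set 'I_n}) : bool :=
  [exists j in S, is_last j].

Definition player_lt_n (n : nat) (i : 'I_n.-1) : 'I_n :=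
  widen_ord (leq_pred n) i.

Definition w (R : realType) (n : nat) (i : 'I_n) : gvec R n :=
  [ffun s : gcoord n =>
     (((i \in val s) && ~~ contains_last (val s)))%:R
   - (((i \notin val s) && contains_last (val s)))%:R].

Definition Mset (R : realType) (n : nat) (alpha : R) (x : gvec R n) : Prop :=
  \sum_(i : 'I_n) gval alpha x [set i] = alpha /\
  forall S : {set 'I_n}, S \proper setT -> (1 < #|S|)%N ->
    gval alpha x S + \sum_(i in ~: S) gval alpha x [set i] = alpha.

(* Main.v *)
Require Import Defs.
From HB Require Import structures.
From mathcomp Require Import all_boot all_order all_algebra.
From mathcomp Require Import reals lra.
Import Order.TTheory GRing.Theory Num.Theory.
Local Open Scope ring_scope.


Set Implicit Arguments.
Unset Strict Implicit.


Definition Lf (R : realType) (n : nat) (B : {set {set 'I_n}})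
  (lam : {set 'I_n} -> R) (al : R) (x : gvec R n) : R :=
  \sum_(S in B) lam S * gval al x S.

Lemma gval_eq (R : realType) n (al : R) (x : gvec R n) (g : {set 'I_n} -> R) :
  (forall s, x s = g (val s)) -> g set0 = 0 -> g setT = al ->
  forall S, gval al x S = g S.
Proof.
move=> hx h0 hT S; rewrite /gval; case: insubP => [s _ <-|] //.
rewrite negb_and !negbK; case/orP => /eqP ->; rewrite ?eqxx //.
by case: ifP => [/eqP ->|].
Qed.

Lemma gval_coord (R : realType) n (al : R) (x : gvec R n) (s : gcoord n) :
  gval al x (val s) = x s.
Proof. by rewrite /gval valK. Qed.

Lemma gvalD (R : realType) n (al : R) (x c : gvec R n) S :
  gval al (x + c) S = gval al x S + gval 0 c S.
Proof.
rewrite /gval; case: insub => [s|]; first by rewrite ffunE.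
by case: ifP; rewrite addr0.
Qed.

Lemma gvalZ0 (R : realType) n (t : R) (c : gvec R n) S :
  gval 0 (t *: c) S = t * gval 0 c S.
Proof.
rewrite /gval; case: insub => [s|]; first by rewrite ffunE.
by case: ifP; rewrite mulr0.
Qed.

Lemma gval0D (R : realType) n (x c : gvec R n) S :
  gval 0 (x + c) S = gval 0 x S + gval 0 c S.
Proof. by rewrite gvalD. Qed.

Lemma gval00 (R : realType) n S : gval 0 (0 : gvec R n) S = 0.
Proof. by rewrite /gval; case: insub => [s|]; [rewrite ffunE|case: ifP]. Qed.

Lemma gval_aff (R : realType) n (al t : R) (x y : gvec R n) S :
  gval al ((1 - t) *: x + t *: y) S = (1 - t) * gval al x S + t * gval al y S.
Proof.
rewrite /gval; case: insub => [s|]; first by rewrite !ffunE.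
case: ifP => _; first by rewrite !mulr0 addr0.
by rewrite mulrBl mul1r subrK.
Qed.

Lemma gval0_sum (R : realType) n (I : finType) (c : I -> R) (y : I -> gvec R n) S :
  gval 0 (\sum_i c i *: y i) S = \sum_i c i * gval 0 (y i) S.
Proof.
rewrite (big_morph (fun z => gval 0 z S) (fun x c => @gval0D R n x c S) (@gval00 R n S)).
by apply: eq_bigr => i _; rewrite gvalZ0.
Qed.

Lemma LfD (R : realType) n B lam (al : R) (x c : gvec R n) :
  Lf B lam al (x + c) = Lf B lam al x + Lf B lam 0 c.
Proof. by rewrite /Lf -big_split; apply: eq_bigr => S _; rewrite gvalD mulrDr. Qed.

Lemma LfZ0 (R : realType) n B lam (t : R) (c : gvec R n) :
  Lf B lam 0 (t *: c) = t * Lf B lam 0 c.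
Proof.
rewrite /Lf mulr_sumr; apply: eq_bigr => S _; rewrite gvalZ0.
by rewrite mulrA (mulrC (lam S)) mulrA.
Qed.

Lemma Lf_aff (R : realType) n B lam (al t : R) (x y : gvec R n) :
  Lf B lam al ((1 - t) *: x + t *: y) = (1 - t) * Lf B lam al x + t * Lf B lam al y.
Proof.
rewrite /Lf !mulr_sumr -big_split; apply: eq_bigr => S _; rewrite gval_aff.
by rewrite mulrDr !mulrA (mulrC (lam S)) (mulrC (lam S)).
Qed.

Lemma Lf_add (R : realType) n B lam (al : R) (x : gvec R n) (a : 'I_n -> R) :
  (forall S, gval al x S = \sum_(i in S) a i) -> \sum_i a i = al ->
  balancing_weights B lam -> Lf B lam al x = al.
Proof.
move=> hx ha [_ hl]; rewrite /Lf.
under eq_bigr => S _ do rewrite hx mulr_sumr.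
rewrite (exchange_big_dep predT) //= -ha; apply: eq_bigr => i _.
by rewrite -mulr_suml hl mul1r.
Qed.


Lemma sum_splitC (R : realType) n (S : {set 'I_n}) (F : 'I_n -> R) :
  \sum_(i in S) F i + \sum_(i in ~: S) F i = \sum_i F i.
Proof.
rewrite [RHS](bigID (mem S)) /=; congr (_ + _).
by apply: eq_bigl => i; rewrite in_setC.
Qed.

Lemma setT_neq0 m : [set: 'I_m.+1] != set0.
Proof. by apply/set0Pn; exists ord0. Qed.

Lemma add_Mset (R : realType) n (al : R) (x : gvec R n) (a : 'I_n -> R) :
  (forall S, gval al x S = \sum_(i in S) a i) -> \sum_i a i = al -> Mset al x.
Proof.
move=> hx ha; have e i : gval al x [set i] = a i by rewrite hx big_set1.
split; first by rewrite (eq_bigr _ (fun i _ => e i)).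
move=> S _ _; rewrite hx (eq_bigr _ (fun i _ => e i)) sum_splitC //.
Qed.

Lemma Mset_add (R : realType) m (al : R) (x : gvec R m.+2) :
  Mset al x -> forall S, gval al x S = \sum_(i in S) gval al x [set i].
Proof.
case=> hs hS S.
have [c0|c2|/eqP c1] := ltngtP #|S| 1.
- move: c0; rewrite ltnS leqn0 cards_eq0 => /eqP ->; rewrite big_set0 /gval.
  by case: insubP => [s|]; rewrite ?eqxx.
- have [->|nT] := eqVneq S setT.
    transitivity al.
      rewrite /gval; case: insubP => [s|]; first by rewrite eqxx andbF.
      by rewrite (negbTE (setT_neq0 _)).
    by rewrite -{1}hs; apply: eq_bigl => i; rewrite in_setT.
  have := hS S; rewrite properT nT => /(_ isT c2) hSS.
  apply: (@addIr _ (\sum_(i in ~: S) gval al x [set i])).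
  by rewrite hSS sum_splitC hs.
- by case/cards1P: c1 => j ->; rewrite big_set1.
Qed.


Lemma part_Bstar (R : realType) n (B : {set {set 'I_n}}) :
  (forall i : 'I_n, exists T, T \in B /\ i \in T) ->
  (forall i S T, S \in B -> T \in B -> i \in S -> i \in T -> S = T) ->
  set0 \notin B -> setT \notin B ->
  Bstar R B /\ balancing_weights B (fun _ => (1 : R)).
Proof.
move=> hc hu h0 hT.
have bw : balancing_weights B (fun _ => (1 : R)).
  split=> [S _|i]; first exact: ltr01.
  have [T [TB iT]] := hc i.
  rewrite (big_pred1 T) // => S /=; apply/andP/eqP => [[SB iS]|->].
    exact: hu iS iT.
  by [].
split=> //; split; last first.
  by apply/negP => /eqP hB; move: hT; rewrite hB in_set1 eqxx.
split; first by split=> //; exists (fun _ => 1).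
move=> B' /properP [sB' [T TB nTB']] [_ [lam [_ hl]]].
have /set0Pn [i iT] : T != set0 by apply: contraNneq h0 => <-.
have := hl i; rewrite big_pred0 => [|S]; first by move/eqP; rewrite eq_sym oner_eq0.
apply/negP => /andP [SB' iS].
have SB := subsetP sB' _ SB'.
by move: nTB'; rewrite -(hu i S T SB TB iS iT) SB'.
Qed.

Lemma set1_neq0 (T : finType) (i : T) : [set i] != set0.
Proof. by apply/set0Pn; exists i; rewrite set11. Qed.

Definition P0 n : {set {set 'I_n}} := [set [set i] | i in [set: 'I_n]].
Definition PS n (S : {set 'I_n}) : {set {set 'I_n}} :=
  S |: [set [set i] | i in ~: S].

Lemma other m (i : 'I_m.+2) : exists j, j != i.
Proof.
case: (eqVneq i ord0) => [->|h]; last by exists ord0; rewrite eq_sym.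
by exists ord_max; apply/eqP => /(congr1 val).
Qed.

Lemma set1_neqT m (i : 'I_m.+2) : [set i] != setT.
Proof.
apply/eqP => h; have [j ji] := other i.
by move: (in_setT j); rewrite -h in_set1 (negbTE ji).
Qed.

Lemma P0_Bstar (R : realType) m :
  Bstar R (P0 m.+2) /\ balancing_weights (P0 m.+2) (fun _ => (1 : R)).
Proof.
apply: part_Bstar.
- by move=> i; exists [set i]; rewrite set11; split=> //; apply: imset_f.
- move=> i S T /imsetP [j _ ->] /imsetP [k _ ->].
  by rewrite !in_set1 => /eqP <- /eqP <-.
- by apply/imsetP => [[j _ /eqP]]; rewrite eq_sym (negbTE (set1_neq0 j)).
- by apply/imsetP => [[j _ /eqP]]; rewrite eq_sym (negbTE (set1_neqT j)).
Qed.

Lemma PS_Bstar (R : realType) m (S : {set 'I_m.+2}) :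
  S \proper setT -> (1 < #|S|)%N ->
  Bstar R (PS S) /\ balancing_weights (PS S) (fun _ => (1 : R)).
Proof.
move=> pS cS.
have S1 i : S != [set i] by apply: contraTneq cS => ->; rewrite cards1.
apply: part_Bstar.
- move=> i; case: (boolP (i \in S)) => iS.
    by exists S; rewrite setU11.
  exists [set i]; rewrite set11; split=> //; apply/setU1P; right.
  by apply: imset_f; rewrite in_setC.
- move=> i U T /setU1P [->|/imsetP [j jS ->]] /setU1P [->|/imsetP [k kS ->]] //.
  + by move=> iS; rewrite in_set1 => /eqP ik; move: kS; rewrite in_setC -ik iS.
  + by move=> /[swap] iS; rewrite in_set1 => /eqP ij; move: jS; rewrite in_setC -ij iS.
  + by rewrite !in_set1 => /eqP <- /eqP <-.
- apply/setU1P => [[/eqP|/imsetP [j _ /eqP]]].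
    by apply/negP; rewrite eq_sym -cards_eq0; apply: contraTneq cS => ->.
  by rewrite eq_sym (negbTE (set1_neq0 j)).
- apply/setU1P => [[/eqP|/imsetP [j _ /eqP]]].
    by apply/negP; rewrite eq_sym -properT.
  by rewrite eq_sym (negbTE (set1_neqT j)).
Qed.

Lemma Lf_P0 (R : realType) m (al : R) (x : gvec R m.+2) :
  Lf (P0 m.+2) (fun _ => 1) al x = \sum_i gval al x [set i].
Proof.
rewrite /Lf /P0 big_imset => [|i j _ _]; last exact: set1_inj.
by apply: eq_big => [i|i _]; rewrite ?in_setT ?mul1r.
Qed.

Lemma Lf_PS (R : realType) m (al : R) (x : gvec R m.+2) (S : {set 'I_m.+2}) :
  (1 < #|S|)%N ->
  Lf (PS S) (fun _ => 1) al x = gval al x S + \sum_(i in ~: S) gval al x [set i].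
Proof.
move=> cS; rewrite /Lf /PS big_setU1; last first.
  by apply/imsetP => [[j _ hj]]; move: cS; rewrite hj cards1.
rewrite mul1r big_imset => [|i j _ _]; last exact: set1_inj.
by congr (_ + _); apply: eq_bigr => i _; rewrite mul1r.
Qed.

Lemma Mset_of (R : realType) m (al : R) (x : gvec R m.+2) :
  (forall B, Bstar R B -> balancing_weights B (fun _ => (1:R)) ->
     Lf B (fun _ => 1) al x = al) -> Mset al x.
Proof.
move=> h; split.
  by rewrite -Lf_P0; apply: h; case: (P0_Bstar R m).
move=> S pS cS; rewrite -Lf_PS //; apply: h; by case: (PS_Bstar R pS cS).
Qed.


Lemma Mset_Lf (R : realType) m (al : R) (x : gvec R m.+2) B lam :
  Mset al x -> balancing_weights B lam -> Lf B lam al x = al.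
Proof.
move=> hM hb; apply: (Lf_add (a := fun i => gval al x [set i])) => //.
  exact: Mset_add.
by case: hM.
Qed.

Lemma Mset_BG (R : realType) m (al : R) (x : gvec R m.+2) :
  Mset al x -> BG al x.
Proof.
move=> hM B _ lam hb; have := Mset_Lf hM hb; rewrite /Lf => ->; exact: lexx.
Qed.

Lemma BG_shift (R : realType) m (al : R) (x c : gvec R m.+2) :
  Mset al x -> (BG al (x + c) <->
  forall B, Bstar R B -> forall lam, balancing_weights B lam -> Lf B lam 0 c <= 0).
Proof.
move=> hM; split.
  move=> h B hB lam hb; have := h B hB lam hb; rewrite -/(Lf B lam al (x + c)).
  by rewrite LfD (Mset_Lf hM hb) gerDl.
move=> h B hB lam hb; rewrite -/(Lf B lam al (x + c)) LfD (Mset_Lf hM hb) gerDl.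
exact: h.
Qed.

Lemma Mset_apex (R : realType) m (al : R) (x : gvec R m.+2) :
  Mset al x -> is_apex (BG al) x.
Proof.
move=> hM; split; first by rewrite addr0; exact: Mset_BG.
split.
  move=> c d /(BG_shift _ hM) hc /(BG_shift _ hM) hd; apply/(BG_shift _ hM).
  move=> B hB lam hb; rewrite /Lf.
  under eq_bigr => S _ do rewrite gval0D mulrDr.
  rewrite big_split /=; apply: (le_trans (lerD (hc _ hB _ hb) (hd _ hB _ hb))).
  by rewrite addr0.
move=> t c t0 /(BG_shift _ hM) hc; apply/(BG_shift _ hM) => B hB lam hb.
by rewrite LfZ0; apply: mulr_ge0_le0 => //; exact: hc.
Qed.

Definition x0 (R : realType) m (al : R) : gvec R m.+2 :=
  [ffun s : gcoord m.+2 => (\sum_(i in val s) al / m.+2%:R : R^o)].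

Lemma x0_sum (R : realType) m (al : R) :
  \sum_(i : 'I_m.+2) al / m.+2%:R = al.
Proof.
by rewrite sumr_const card_ord -[LHS]mulr_natr divfK // pnatr_eq0.
Qed.

Lemma x0_gval (R : realType) m (al : R) S :
  gval al (x0 m al) S = \sum_(i in S) al / m.+2%:R.
Proof.
apply: (gval_eq (g := fun S => \sum_(i in S) al / m.+2%:R)) => [s||].
- by rewrite ffunE.
- by rewrite big_set0.
by rewrite -[RHS](x0_sum m al); apply: eq_bigl => i; rewrite in_setT.
Qed.

Lemma x0_Mset (R : realType) m (al : R) : Mset al (x0 m al).
Proof. exact: (add_Mset (@x0_gval R m al) (x0_sum m al)). Qed.

Lemma contains_lastE m (S : {set 'I_m.+2}) : contains_last S = (ord_max \in S).
Proof.
rewrite /contains_last. apply/existsP/idP.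
  case=> j /andP [jS hj].
  by have <- : j = ord_max by apply: val_inj; apply/eqP; exact: hj.
by move=> hS; exists ord_max; rewrite hS /is_last /= eqxx.
Qed.

Lemma gval_w (R : realType) m (i : 'I_m.+2) S :
  gval 0 (w R i) S = (i \in S)%:R - (ord_max \in S)%:R.
Proof.
apply: (gval_eq (g := fun S => (i \in S)%:R - (ord_max \in S)%:R)) => [s||]; last by rewrite !in_setT subrr.
  rewrite ffunE contains_lastE.
  by case: (i \in val s); case: (ord_max \in val s); rewrite /= ?subr0 ?sub0r ?subrr.
by rewrite !in_set0 subrr.
Qed.

Lemma sum_ind (R : realType) n (B : {set {set 'I_n}}) (lam : {set 'I_n} -> R) (P : pred {set 'I_n}) :
  \sum_(S in B) lam S * (P S)%:R = \sum_(S in B | P S) lam S.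
Proof.
rewrite [RHS]big_mkcondr; apply: eq_bigr => S _.
by case: (P S); rewrite ?mulr1 ?mulr0.
Qed.

Lemma Lf_w (R : realType) m B lam (i : 'I_m.+2) :
  balancing_weights B lam -> Lf B lam 0 (w R i) = 0.
Proof.
move=> [_ hl]; rewrite /Lf.
under eq_bigr => S _ do rewrite gval_w mulrBr.
rewrite sumrB (sum_ind B lam (fun S => i \in S)) (sum_ind B lam (fun S => ord_max \in S)).
by rewrite !hl subrr.
Qed.

Lemma Lf_sum (R : realType) n B lam (I : finType) (c : I -> R) (y : I -> gvec R n) :
  Lf B lam 0 (\sum_i c i *: y i) = \sum_i c i * Lf B lam 0 (y i).
Proof.
rewrite /Lf.
under eq_bigr => S _ do rewrite gval0_sum mulr_sumr.
rewrite exchange_big /=; apply: eq_bigr => i _; rewrite mulr_sumr.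
by apply: eq_bigr => S _; rewrite mulrA (mulrC (lam S)) mulrA.
Qed.


Lemma lin_of (R : realType) n (al : R) (d : gvec R n) :
  (forall B lam, balancing_weights B lam -> Lf B lam 0 d = 0) ->
  lineality (BG al) d.
Proof.
move=> h x t hx B hB lam hb; rewrite -/(Lf B lam al (x + t *: d)).
by rewrite LfD LfZ0 h // mulr0 addr0; exact: hx.
Qed.

Lemma gval0_le0 (R : realType) n (c : gvec R n) S :
  (forall s, c s <= 0) -> gval 0 c S <= 0.
Proof. by move=> h; rewrite /gval; case: insub => [s|] //; case: ifP. Qed.

Lemma gw1 (R : realType) m (i k : 'I_m.+1) :
  gval 0 (w R (player_lt_n (n:=m.+2) i)) [set player_lt_n (n:=m.+2) k] = (i == k)%:R.
Proof.
rewrite gval_w !in_set1.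
have -> : (ord_max == player_lt_n (n:=m.+2) k) = false.
  by apply/negbTE/eqP => /(congr1 val) /= h; move: (ltn_ord k); rewrite -h ltnn.
have -> : (player_lt_n (n:=m.+2) i == player_lt_n (n:=m.+2) k) = (i == k).
  by apply/eqP/eqP => [/(congr1 val) h|->] //; apply: val_inj.
by rewrite subr0.
Qed.

Lemma ident (R : realType) m (a : 'I_m.+2 -> R) (S : {set 'I_m.+2}) :
  \sum_i a i = 0 ->
  \sum_(i in S) a i = \sum_(k < m.+1) a (player_lt_n (n:=m.+2) k) *
     ((player_lt_n (n:=m.+2) k \in S)%:R - (ord_max \in S)%:R).
Proof.
have pw k : player_lt_n (n:=m.+2) k = widen_ord (leqnSn m.+1) k by apply: val_inj.
rewrite big_ord_recr /= => h.
have ha : a ord_max = - \sum_(k < m.+1) a (widen_ord (leqnSn m.+1) k).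
  by apply/eqP; rewrite -addr_eq0 addrC h.
rewrite big_mkcond big_ord_recr /=.
under [RHS]eq_bigr => k _ do rewrite pw mulrBr.
rewrite sumrB -mulr_suml ha; congr (_ + _).
  by apply: eq_bigr => k _; case: (_ \in S); rewrite ?mulr1 ?mulr0.
by case: (_ \in S); rewrite ?mulr1 ?mulr0 ?subr0 ?oppr0 // sub0r.
Qed.


Lemma card_gcoord m : #|gcoord m.+2| = (2 ^ m.+2 - 2)%N.
Proof.
rewrite card_sig.
have -> : #|[pred x : {set 'I_m.+2} | (x != set0) && (x != setT)]| =
          #|~: [set set0; [set: 'I_m.+2]]|.
  by apply: eq_card => S; rewrite !inE negb_or.
rewrite cardsCs setCK cards2 eq_sym setT_neq0.
by rewrite -cardsT -powersetT card_powerset cardsT card_ord.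
Qed.


Unset Implicit Arguments.
Set Strict Implicit.

Theorem theorem5 (R : realType) (n : nat) (alpha : R) (hn : (2 <= n)%N) :
  (* BG_alpha(n) is an affine cone ... *)
  is_affine_cone (BG (n:=n) alpha)
  (* ... of dimension 2^n - 2 (the ambient space has #|gcoord n| = 2^n - 2
     coordinates and BG contains 2^n - 1 affinely independent points) ... *)
  /\ #|gcoord n| = (2 ^ n - 2)%N
  /\ (exists (x0 : gvec R n) (b : 'I_(2 ^ n - 2) -> gvec R n),
        BG (n:=n) alpha x0 /\ (forall k, BG (n:=n) alpha (x0 + b k)) /\ lin_indep b)
  (* ... which is not pointed; *)
  /\ (exists d : gvec R n, d != 0 /\ lineality (BG (n:=n) alpha) d)
  (* its lineality space has basis (w_i)_{i in N \ {n}} (dimension n - 1); *)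
  /\ lin_indep (fun i : 'I_n.-1 => w R (player_lt_n i))
  /\ (forall d : gvec R n, lineality (BG (n:=n) alpha) d <->
        exists c : 'I_n.-1 -> R, d = \sum_(i < n.-1) c i *: w R (player_lt_n i))
  (* the set Mset is an affine subspace contained in BG_alpha(n),
     maximal (w.r.t. inclusion) among affine subspaces contained in it,
     and consists of apexes of the affine cone BG_alpha(n). *)
  /\ is_affine_subspace (Mset (n:=n) alpha)
  /\ (forall x, Mset (n:=n) alpha x -> BG (n:=n) alpha x)
  /\ (forall A : gvec R n -> Prop, is_affine_subspace A ->
        (forall x, Mset (n:=n) alpha x -> A x) -> (forall x, A x -> BG (n:=n) alpha x) ->
        forall x, A x -> Mset (n:=n) alpha x)
  /\ (forall x, Mset (n:=n) alpha x -> is_apex (BG (n:=n) alpha) x).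
Proof.
case: n hn => [|[|m]] // _.
have hM0 := x0_Mset m alpha.
have linw : forall d : gvec R m.+2,
    (exists c : 'I_m.+1 -> R, d = \sum_(i < m.+1) c i *: w R (player_lt_n (n:=m.+2) i)) ->
    lineality (BG alpha) d.
  move=> d [c ->]; apply: lin_of => B lam hb.
  by rewrite Lf_sum big1 // => i _; rewrite Lf_w // mulr0.
split.
  exists (x0 m alpha), (fun c => BG alpha (x0 m alpha + c)); split.
    exact: Mset_apex.
  move=> x; split => [hx|[c [hc ->]]] //.
  by exists (x - x0 m alpha); rewrite addrC subrK.
split; first exact: card_gcoord.
split.
  pose f (k : 'I_(2 ^ m.+2 - 2)) : gcoord m.+2 :=
    enum_val (cast_ord (esym (card_gcoord m)) k).
  have finj : injective f.
    by move=> k1 k2 /enum_val_inj /cast_ord_inj.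
  pose b k : gvec R m.+2 := [ffun s => - ((s == f k)%:R) : R^o].
  exists (x0 m alpha), b; split; first exact: Mset_BG.
  split.
    move=> k; apply/(BG_shift _ hM0) => B hB lam [hpos _].
    rewrite /Lf -oppr_ge0 -sumrN; apply: sumr_ge0 => S SB.
    rewrite -mulrN; apply: mulr_ge0; first exact: ltW (hpos S SB).
    rewrite oppr_ge0; apply: gval0_le0 => s; rewrite ffunE oppr_le0.
    exact: ler0n.
  move=> c hc k; have := congr1 (fun x : gvec R m.+2 => x (f k)) hc => /=.
  rewrite sum_ffunE ffunE (bigD1 k) //= big1 => [|i ik].
    rewrite !ffunE eqxx addr0 /= mulr1n => h; have /eqP : c k * -1 = 0 := h.
    by rewrite mulrN1 oppr_eq0 => /eqP.
  by rewrite !ffunE (inj_eq finj) eq_sym (negbTE ik) /= oppr0 scaler0.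
split.
  exists (w R (player_lt_n (n:=m.+2) ord0)); split; last first.
    apply: linw; exists (fun i => (i == ord0)%:R).
    rewrite (bigD1 ord0) //= big1 => [|i i0]; first by rewrite scale1r addr0.
    by rewrite (negbTE i0) scale0r.
  apply/eqP => h; have := gw1 R (ord0 : 'I_m.+1) ord0.
  by rewrite h gval00 eqxx => /eqP; rewrite eq_sym oner_eq0.
split.
  move=> c hc k; have := congr1 (fun x : gvec R m.+2 => gval 0 x [set player_lt_n (n:=m.+2) k]) hc.
  rewrite /= gval0_sum gval00 (bigD1 k) //= big1 => [|i ik].
    by rewrite gw1 eqxx mulr1 addr0.
  by rewrite gw1 (negbTE ik) mulr0.
split.
  move=> d; split; last exact: linw.
  move=> hl.
  have hz B lam : Bstar R B -> balancing_weights B lam -> Lf B lam 0 d = 0.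
    move=> hB hb; apply/le_anti/andP; split.
      have := hl _ 1 (Mset_BG hM0); move/(BG_shift _ hM0) => /(_ B hB lam hb).
      by rewrite LfZ0 mul1r.
    have := hl _ (-1) (Mset_BG hM0); move/(BG_shift _ hM0) => /(_ B hB lam hb).
    by rewrite LfZ0 mulN1r oppr_le0.
  have hMd : Mset 0 d by apply: Mset_of => B hB hb; exact: hz.
  have hadd := Mset_add hMd.
  exists (fun k => gval 0 d [set player_lt_n (n:=m.+2) k]).
  apply/ffunP => s.
  rewrite -(gval_coord 0 d s) -(gval_coord 0 (\sum_(i < m.+1) _ *: _) s).
  rewrite gval0_sum hadd (ident _ hMd.1); apply: eq_bigr => k _.
  by rewrite gval_w.
split.
  split; first by exists (x0 m alpha).
  move=> x y t [hx1 hx2] [hy1 hy2]; split.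
    under eq_bigr => i _ do rewrite gval_aff.
    by rewrite big_split /= -!mulr_sumr hx1 hy1 mulrBl mul1r subrK.
  move=> S pS cS; rewrite gval_aff.
  under eq_bigr => i _ do rewrite gval_aff.
  rewrite big_split /= -!mulr_sumr.
  by rewrite addrACA -!mulrDr (hx2 S pS cS) (hy2 S pS cS) mulrBl mul1r subrK.
split; first by move=> x; exact: Mset_BG.
split; last by move=> x; exact: Mset_apex.
move=> A [_ hA] hMA hAB x Ax; apply: Mset_of => B hB hb.
have h1 := hAB x Ax B hB _ hb.
have Ay := hA _ _ (-1) (hMA _ hM0) Ax.
have h2 := hAB _ Ay B hB _ hb.
rewrite -/(Lf B _ alpha _) Lf_aff (Mset_Lf hM0 hb) in h2.
rewrite -/(Lf B _ alpha _) in h1.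
lra.
Qed.
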